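(* Let $L=(\widehat{\mathbb L}(V),d)$ be a connected minimal cdgl with $V$ bounded above, and fix a finite filtration of $V$ by graded subspaces $V=V^0\supset V^1\supset\cdots\supset V^{q-1}\supset V^q=0$. Let $\{F^t\}_{t\ge1}$ be the associated filtration of $\widehat{\mathbb L}(V)$ and, for $n\ge1$, let $\mathcal F^n=\{\theta\in\operatorname{Der}L:\ \theta(F^r)\subset F^{n+r}\text{ for all } r\ge 1\}$. Then $\mathcal F^1$ is a complete differential graded Lie algebra with respect to the filtration $\{\mathcal F^n\}_{n\ge1}$.
   Context: All vector spaces are rational and $\mathbb Z$-graded. $\widehat{\mathbb L}(V)=\varprojlim_n \mathbb L(V)/\mathbb L(V)^n$ is the completion of the free graded Lie algebra on $V$ with respect to its lower central series; $\widehat{\mathbb L}^n(V)$ denotes the (completed) subspace of brackets of length $n$ and $\widehat{\mathbb L}^{\ge n}(V)$ that of brackets of length $\ge n$. ''Connected'' means concentrated in nonnegative degrees; ''minimal'' means $d$ is decomposable ($d(V)\subset\widehat{\mathbb L}^{\ge2}(V)$); $V$ bounded above means $V_{>m}=0$ for some $m$. $\operatorname{Der}L$ is the dgl of derivations of $L$ with the commutator bracket and differential $D=[d,-]$. The filtration $F^t$: for $n\ge1$, $p\ge0$, let $\widehat{\mathbb L}^{n,p}(V)$ be the span of the brackets $[v_1,[v_2,[\dots,[v_{n-1},v_n]\dots]]]\in\widehat{\mathbb L}^n(V)$ with $v_i\in V^{\alpha_i}$ and $\sum_i\alpha_i=p$, and set $F^{n,p}=\widehat{\mathbb L}^{n,p}(V)\oplus\widehat{\mathbb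 L}^{\ge n+1}(V)$. For $n\ge1$ and $0\le p\le nq-1$ put $F^t=F^{n,p}$ with $t=\frac{(n-1)nq}{2}+p+1$, so $\widehat{\mathbb L}(V)=F^1\supset F^2\supset\cdots$. A dgl $M$ filtered by a decreasing sequence of differential ideals $M=\mathcal F^1\supset\mathcal F^2\supset\cdots$ with $[\mathcal F^p,\mathcal F^q]\subset\mathcal F^{p+q}$ is complete if $M\to\varprojlim_n M/\mathcal F^n$ is an isomorphism. *)

(* Defs.v *)
(* Model of the completed free graded Lie algebra \hat L(V)
   over Q, V a graded Q-vector space given by a homogeneous basis B with
   degree map deg : B -> int.  \hat L(V) is realised inside the completed
   tensor algebra (formal noncommutative power series), i.e. functions
   seq B -> rat (coefficient of each word). *)
From mathcomp Require Import all_boot all_order all_algebra.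
Set Implicit Arguments. Unset Strict Implicit. Unset Printing Implicit Defensive.
Import Order.TTheory GRing.Theory Num.Theory.
Local Open Scope ring_scope.

Section FreeLie.
Variable B : choiceType.
Variable deg : B -> int.

Definition T := seq B -> rat.
Definition vec := B -> rat.
Definition isV (v : vec) : Prop := exists s : seq B, forall b, b \notin s -> v b = 0.

Definition zeroT : T := fun _ => 0.
Definition zeroV : vec := fun _ => 0.

Definition wdeg (w : seq B) : int := \sum_(b <- w) deg b.
Definition sgn (z : int) : rat := (-1) ^+ `|z|%N.

(* graded commutator [f,g] = fg - (-1)^{|f||g|} gf in \hat T(V) *)
Definition brk (f g : T) : T := fun w =>
  \sum_(i < (size w).+1)
    (f (take i w) * g (drop i w)
     - sgn (wdeg (take i w) * wdeg (drop i w)) * g (take i w) * f (drop i w)).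

Definition iota (v : vec) : T := fun w =>
  match w with [:: b] => v b | _ => 0 end.

Fixpoint rbr (vs : seq vec) : T :=
  match vs with
  | [::] => zeroT
  | [:: v] => iota v
  | v :: vs' => brk (iota v) (rbr vs')
  end.

Definition span (P : T -> Prop) (g : T) : Prop :=
  exists s : seq (rat * T),
    (forall i, (i < size s)%N -> P (nth (0, zeroT) s i).2) /\
    g = (fun w => \sum_(x <- s) x.1 * x.2 w).

Definition trunc (n : nat) (f : T) : T := fun w => if size w == n then f w else 0.

Definition Lie (n : nat) : T -> Prop :=
  span (fun h => exists vs : seq vec,
          size vs = n /\ (forall i, (i < n)%N -> isV (nth zeroV vs i)) /\ h = rbr vs).

Definition homog (k : int) (f : T) : Prop := forall w, f w != 0 -> wdeg w = k.

(* \hat L(V) (graded: finite sums of homogeneous elements, each of which is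
   an element of the inverse limit of L/L^n, i.e. a sequence of
   length components in L^n(V)) *)
Definition isL (f : T) : Prop :=
  (forall n, Lie n (trunc n f)) /\
  exists ks : seq int, forall w, f w != 0 -> wdeg w \in ks.

Definition Lge (n : nat) (f : T) : Prop :=
  isL f /\ forall w, (size w < n)%N -> f w = 0.

Definition lincomb (a : rat) (f g : T) : T := fun w => a * f w + g w.

Definition isDer (j : int) (th : T -> T) : Prop :=
  (forall f, isL f -> isL (th f)) /\
  (forall k f, isL f -> homog k f -> homog (k + j) (th f)) /\
  (forall a f g, isL f -> isL g -> th (lincomb a f g) = lincomb a (th f) (th g)) /\
  (forall k f g, isL f -> homog k f -> isL g ->
     th (brk f g) = (fun w => brk (th f) g w + sgn (j * k) * brk f (th g) w)).

Definition is_cdgl_diff (d : T -> T) : Prop :=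
  isDer (-1) d /\
  (forall f, isL f -> d (d f) = zeroT) /\
  (forall n f, Lge n f -> Lge n (d f)).

Definition minimal (d : T -> T) : Prop :=
  forall v, isV v -> Lge 2 (d (iota v)).

Definition dbr (i j : int) (th et : T -> T) : T -> T :=
  fun f w => th (et f) w - sgn (i * j) * et (th f) w.

Definition dlincomb (a : rat) (th et : T -> T) : T -> T :=
  fun f => lincomb a (th f) (et f).

Variable Vf : nat -> vec -> Prop.

Definition Lnp (n p : nat) : T -> Prop :=
  span (fun h => exists (vs : seq vec) (al : seq nat),
          size vs = n /\ size al = n /\ sumn al = p /\
          (forall i, (i < n)%N -> Vf (nth 0%N al i) (nth zeroV vs i)) /\
          h = rbr vs).

(* F^{n,p} = \hat L^{n,p}(V) (+) \hat L^{>= n+1}(V) *)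
Definition Fnp (n p : nat) (f : T) : Prop :=
  Lge n f /\ Lnp n p (trunc n f).

Definition Ft (q t : nat) (f : T) : Prop :=
  exists n p : nat, (0 < n)%N /\ (p < n * q)%N /\
    t = ((n.-1 * n) %/ 2 * q + p + 1)%N /\ Fnp n p f.

(* homogeneous degree-j part of \mathcal F^n *)
Definition Fder (q n : nat) (j : int) (th : T -> T) : Prop :=
  isDer j th /\ forall (r : nat) f, (0 < r)%N -> Ft q r f -> Ft q (n + r) (th f).

End FreeLie.

(* Main.v *)
Require Import Defs.
From mathcomp Require Import all_boot all_order all_algebra.
From mathcomp Require Import ring zify.
From Stdlib Require Import FunctionalExtensionality.
Import Order.TTheory GRing.Theory Num.Theory.
Local Open Scope ring_scope.
Set Implicit Arguments. Unset Strict Implicit. Unset Printing Implicit Defensive.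
Fixpoint allP {A : Type} (P : A -> Prop) (s : seq A) : Prop :=
  match s with [::] => True | x :: s' => P x /\ allP P s' end.

Lemma allP_nth {A : Type} (P : A -> Prop) x0 s :
  (forall i, (i < size s)%N -> P (nth x0 s i)) <-> allP P s.
Proof.
elim: s => [|x s IH] /=; first by split.
split.
- move=> H; split; first exact: (H 0%N).
  apply/IH => i Hi; exact: (H i.+1).
- case=> Hx /IH Hs [|i] //= Hi; exact: Hs.
Qed.

Lemma allP_cat {A : Type} (P : A -> Prop) s1 s2 : allP P s1 -> allP P s2 -> allP P (s1 ++ s2).
Proof. elim: s1 => [|x s IH] /=; first by move=> _.
by move=> [] Hx Hs H2; split => //; exact: IH. Qed.

Lemma allP_map {A C : Type} (P : C -> Prop) (f : A -> C) s : allP (fun x => P (f x)) s -> allP P (map f s).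
Proof. elim: s => [|x s IH] //= [] Hx Hs; split => //; exact: IH. Qed.

Lemma allP_impl {A : Type} (P Q : A -> Prop) s : (forall x, P x -> Q x) -> allP P s -> allP Q s.
Proof. move=> H; elim: s => [|x s IH] //= [] Hx Hs; split; [exact: H| exact: IH]. Qed.

Lemma sgnD (a b : int) : sgn (a + b) = sgn a * sgn b.
Proof. by rewrite /sgn -!expN1r expfzDr // oppr_eq0 oner_eq0. Qed.

Lemma sgn_pm (z : int) : sgn z = 1 \/ sgn z = -1.
Proof. by rewrite /sgn -signr_odd; case: odd; [right|left]; rewrite ?expr1 ?expr0. Qed.

Section Gen.
Variable B : choiceType.
Variable deg : B -> int.
Local Notation TT := (T B).
Local Notation VV := (vec B).
Local Notation z0 := (@zeroT B).
Local Notation brk := (brk deg).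
Local Notation rbr := (rbr deg).
Local Notation wdeg := (wdeg deg).
Local Notation homog := (homog deg).
Local Notation Lie := (Lie deg).
Local Notation isL := (isL deg).
Local Notation Lge := (Lge deg).

Definition subsp (S : TT -> Prop) := S z0 /\ forall a f g, S f -> S g -> S (lincomb a f g).

Lemma span_ind (P S : TT -> Prop) : subsp S -> (forall h, P h -> S h) ->
  forall g, Defs.span P g -> S g.
Proof.
move=> [S0 Sl] HP g [s [Hs ->]].
move/(allP_nth (fun x : rat * TT => P x.2)): Hs.
elim: s => [|x s IH] /= Hs.
- have ->: (fun w => \sum_(x <- [::]) x.1 * x.2 w) = z0.
    by apply: functional_extensionality => w; rewrite big_nil.
  exact S0.
- case: Hs => Hx Hs.
  have ->: (fun w => \sum_(y <- x :: s) y.1 * y.2 w) = lincomb x.1 x.2 (fun w => \sum_(y <- s) y.1 * y.2 w).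
    by apply: functional_extensionality => w; rewrite big_cons.
  apply: Sl; [exact: HP | exact: IH].
Qed.

Lemma span_sub P : subsp (Defs.span P).
Proof.
split.
- exists [::]; split => // .
  by apply: functional_extensionality => w; rewrite big_nil.
- move=> a f g [s1 [H1 ->]] [s2 [H2 ->]].
  exists (map (fun x => (a * x.1, x.2)) s1 ++ s2); split.
  + apply/(allP_nth (fun x : rat * TT => P x.2)); apply: allP_cat.
    * apply: allP_map => /=. exact: (proj1 (allP_nth (fun x : rat * TT => P x.2) (0, z0) s1) H1).
    * exact: (proj1 (allP_nth (fun x : rat * TT => P x.2) (0, z0) s2) H2).
  + apply: functional_extensionality => w.
    rewrite /lincomb big_cat big_map /= mulr_sumr; congr (_ + _).
    by apply: eq_bigr => x _; rewrite mulrA.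
Qed.

Lemma span_gen (P : TT -> Prop) h : P h -> Defs.span P h.
Proof.
move=> Hh; exists [:: (1, h)]; split.
- by case.
- by apply: functional_extensionality => w; rewrite big_seq1 mul1r.
Qed.

Lemma span_mono2 (P Q : TT -> Prop) : (forall h, P h -> Defs.span Q h) ->
  forall g, Defs.span P g -> Defs.span Q g.
Proof. move=> H; exact: span_ind (span_sub Q) H. Qed.

Lemma subsp_zero S : subsp S -> S z0. Proof. by case. Qed.

Lemma subsp_sumseq (I : Type) (S : TT -> Prop) (r : seq I) (F : I -> TT) :
  subsp S -> allP (fun i => S (F i)) r -> S (fun w => \sum_(i <- r) F i w).
Proof.
move=> [S0 Sl]; elim: r => [|x r IH] /=.
- have ->: (fun w => \sum_(i <- [::]) F i w) = z0.
    by apply: functional_extensionality => w; rewrite big_nil.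
  by [].
- case=> Hx /IH Hr.
  have ->: (fun w => \sum_(i <- x :: r) F i w) = lincomb 1 (F x) (fun w => \sum_(i <- r) F i w).
    by apply: functional_extensionality => w; rewrite big_cons /lincomb mul1r.
  exact: Sl.
Qed.

Lemma brk_linl a f g h : brk (lincomb a f g) h = lincomb a (brk f h) (brk g h).
Proof.
apply: functional_extensionality => w.
rewrite /Defs.brk /lincomb mulr_sumr -big_split /=; apply: eq_bigr => i _; ring.
Qed.

Lemma brk_linr a f g h : brk h (lincomb a f g) = lincomb a (brk h f) (brk h g).
Proof.
apply: functional_extensionality => w.
rewrite /Defs.brk /lincomb mulr_sumr -big_split /=; apply: eq_bigr => i _; ring.
Qed.

Lemma brk0l g : brk z0 g = z0.
Proof.
apply: functional_extensionality => w.
rewrite /Defs.brk /zeroT big1 // => i _; ring.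
Qed.

Lemma brk0r g : brk g z0 = z0.
Proof.
apply: functional_extensionality => w.
rewrite /Defs.brk /zeroT big1 // => i _; ring.
Qed.

Lemma brk_span (P Q : TT -> Prop) f g : Defs.span P f -> Defs.span Q g ->
  Defs.span (fun h => exists p q, P p /\ Q q /\ h = brk p q) (brk f g).
Proof.
move=> Hf Hg.
pose R := (fun h => exists p q, P p /\ Q q /\ h = brk p q).
have Hl : forall p, P p -> Defs.span R (brk p g).
  move=> p Hp.
  apply: (span_ind (S := fun g => Defs.span R (brk p g))) Hg.
  - split; first by rewrite brk0r; exact: subsp_zero (span_sub R).
    move=> a u v Hu Hv; rewrite brk_linr; exact: (proj2 (span_sub R)).
  - move=> h Hh; apply: span_gen; by exists p, h.
apply: (span_ind (S := fun f => Defs.span R (brk f g))) Hf => //.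
split; first by rewrite brk0l; exact: subsp_zero (span_sub R).
move=> a u v Hu Hv; rewrite brk_linl; exact: (proj2 (span_sub R)).
Qed.

Lemma wdeg_cat u v : wdeg (u ++ v) = wdeg u + wdeg v.
Proof. by rewrite /Defs.wdeg big_cat. Qed.

Lemma brk_nz f g w : brk f g w != 0 -> exists i : nat,
  (f (take i w) != 0 /\ g (drop i w) != 0) \/ (g (take i w) != 0 /\ f (drop i w) != 0).
Proof.
move=> H.
case: (boolP [exists i : 'I_(size w).+1, (f (take i w) * g (drop i w) != 0) || (g (take i w) * f (drop i w) != 0)]).
- move/existsP => [i /orP [E|E]]; exists i; [left|right]; move: E;
    rewrite mulf_eq0 negb_or => /andP[]; by split.
- rewrite negb_exists => /forallP Hall. exfalso; move/negP: H; apply; apply/eqP.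
  rewrite /Defs.brk big1 // => i _; move: (Hall i); rewrite negb_or !negbK => /andP[/eqP -> /eqP E].
  by rewrite -mulrA E mulr0 subr0.
Qed.

Lemma homog_brk k l f g : homog k f -> homog l g -> homog (k + l) (brk f g).
Proof.
move=> hf hg w /brk_nz [i [[A C]|[A C]]].
- by rewrite -(cat_take_drop i w) wdeg_cat (hf _ A) (hg _ C).
- by rewrite -(cat_take_drop i w) wdeg_cat (hg _ A) (hf _ C) addrC.
Qed.

Definition mul (f g : TT) : TT := fun w =>
  \sum_(i < (size w).+1) f (take i w) * g (drop i w).

Lemma mul_cons f g b w : mul f g (b :: w) = f [::] * g (b :: w) + mul (fun u => f (b :: u)) g w.
Proof.
by rewrite /mul /= big_ord_recl /=.
Qed.

Lemma mul_nil f g : mul f g [::] = f [::] * g [::].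
Proof. by rewrite /mul big_ord1. Qed.

Lemma mul_linl c X Y h w : mul (fun u => c * X u + Y u) h w = c * mul X h w + mul Y h w.
Proof. rewrite /mul mulr_sumr -big_split; apply: eq_bigr => i _ /=; ring. Qed.

Lemma mul_subl c X Y h w : mul (fun u => X u - c * Y u) h w = mul X h w - c * mul Y h w.
Proof. rewrite /mul mulr_sumr -sumrB; apply: eq_bigr => i _ /=; ring. Qed.

Lemma mul_subr c X Y h w : mul h (fun u => X u - c * Y u) w = mul h X w - c * mul h Y w.
Proof. rewrite /mul mulr_sumr -sumrB; apply: eq_bigr => i _ /=; ring. Qed.

Lemma mul_assoc w : forall f g h, mul (mul f g) h w = mul f (mul g h) w.
Proof.
elim: w => [|b w IH] f g h.
- by rewrite !mul_nil mulrA.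
- rewrite !mul_cons.
  have -> : (fun u => mul f g (b :: u)) = (fun u => f [::] * g (b :: u) + mul (fun u' => f (b :: u')) g u).
    by apply: functional_extensionality => u; rewrite mul_cons.
  rewrite (mul_linl (f [::]) (fun u => g (b :: u))) IH mul_nil; ring.
Qed.

Lemma brk_mul k l f g : homog k f -> homog l g ->
  brk f g = fun w => mul f g w - sgn (k * l) * mul g f w.
Proof.
move=> hf hg; apply: functional_extensionality => w.
rewrite /Defs.brk /mul mulr_sumr -sumrB; apply: eq_bigr => i _.
case: (eqVneq (g (take i w) * f (drop i w)) 0) => [E | NE].
- by rewrite -mulrA E !mulr0.
- move: (NE); rewrite mulf_eq0 negb_or => /andP[A C].
  by rewrite (hg _ A) (hf _ C) -mulrA (mulrC l k).
Qed.

Lemma jacobi ka kx ky a x y : homog ka a -> homog kx x -> homog ky y ->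
  brk (brk a x) y = fun w => brk a (brk x y) w - sgn (ka * kx) * brk x (brk a y) w.
Proof.
move=> ha hx hy.
rewrite (brk_mul (homog_brk ha hx) hy) (brk_mul ha (homog_brk hx hy)) (brk_mul hx (homog_brk ha hy)).
rewrite (brk_mul ha hx) (brk_mul hx hy) (brk_mul ha hy).
apply: functional_extensionality => w.
rewrite !mul_subl !mul_subr !mul_assoc.
rewrite !mulrDl !mulrDr !sgnD [kx * ka]mulrC.
case: (sgn_pm (ka * kx)) => ->; case: (sgn_pm (ka * ky)) => ->; case: (sgn_pm (kx * ky)) => ->; ring.
Qed.

Lemma sum_if0 (I : eqType) (r : seq I) x (c : rat) : x \notin r ->
  \sum_(k <- r) (if x == k then c else 0) = 0.
Proof.
move=> Hx; rewrite big1_seq // => k /andP[_ Hk].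
case: eqP => // E; by rewrite E Hk in Hx.
Qed.

Lemma sum_if1 (I : eqType) (r : seq I) x (c : rat) : uniq r -> x \in r ->
  \sum_(k <- r) (if x == k then c else 0) = c.
Proof.
elim: r => [|y r IH] //= /andP[Hy Hu]; rewrite in_cons big_cons.
case: eqP => [E _|Ne /= Hx]; first by rewrite sum_if0 ?addr0 // E.
by rewrite IH // add0r.
Qed.

Lemma cons_nnil (A : Type) (x : A) s : x :: s <> [::]. Proof. by []. Qed.

Definition hv k (v : VV) := forall b, v b != 0 -> deg b = k.
Definition Hvec (v : VV) := isV v /\ exists k, hv k v.
Definition Hn n (h : TT) := exists vs, size vs = n /\ allP Hvec vs /\ h = rbr vs.
Definition lenH n (f : TT) := forall w, f w != 0 -> size w = n.
Definition projd k (f : TT) : TT := fun w => if wdeg w == k then f w else 0.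
Definition projv k (v : VV) : VV := fun b => if deg b == k then v b else 0.

Lemma rbr_cons2 u v vs : rbr (u :: v :: vs) = brk (Defs.iota u) (rbr (v :: vs)).
Proof. by []. Qed.

Lemma brk_iota_rbr u vs : vs <> [::] -> brk (Defs.iota u) (rbr vs) = rbr (u :: vs).
Proof. by case: vs. Qed.

Lemma homog_iota k v : hv k v -> homog k (Defs.iota v).
Proof.
move=> H [|b [|c w]] /=; rewrite ?eqxx // => /H <-.
by rewrite /Defs.wdeg big_seq1.
Qed.

Lemma homog_zero k : homog k z0.
Proof. by move=> w; rewrite /zeroT eqxx. Qed.

Lemma homog_rbr vs : allP Hvec vs -> exists k, homog k (rbr vs).
Proof.
elim: vs => [|v vs IH]; first by exists 0; exact: homog_zero.
case: vs IH => [|v' vs] IH [[_ [k Hk]] Hs].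
- exists k; exact: homog_iota.
- have [k' Hk'] := IH Hs.
  exists (k + k'); rewrite rbr_cons2; apply: homog_brk => //; exact: homog_iota.
Qed.

Lemma lenH_brk a b f g : lenH a f -> lenH b g -> lenH (a + b) (brk f g).
Proof.
move=> hf hg w /brk_nz [i [[A C]|[A C]]].
- by rewrite -(cat_take_drop i w) size_cat (hf _ A) (hg _ C).
- by rewrite -(cat_take_drop i w) size_cat (hg _ A) (hf _ C) addnC.
Qed.

Lemma lenH_rbr vs : lenH (size vs) (rbr vs).
Proof.
elim: vs => [|v vs IH]; first by move=> w; rewrite /zeroT eqxx.
case: vs IH => [|v' vs] IH.
- by move=> [|b [|c w]] //=; rewrite eqxx.
- rewrite rbr_cons2 => w H.
  have := lenH_brk (a := 1) _ IH H; apply.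
  by move=> [|b [|c u]] //=; rewrite eqxx.
Qed.

Lemma brkA_span u m g : Hvec u -> (0 < m)%N -> Defs.span (Hn m) g ->
  Defs.span (Hn m.+1) (brk (Defs.iota u) g).
Proof.
move=> Hu Hm.
apply: (span_ind (S := fun g => Defs.span (Hn m.+1) (brk (Defs.iota u) g))).
- split; first by rewrite brk0r; exact: subsp_zero (span_sub _).
  move=> a f g' Hf Hg; rewrite brk_linr; exact: (proj2 (span_sub _)).
- move=> h [hs [Hs [Ha ->]]].
  rewrite brk_iota_rbr; last by case: hs Hs {Ha} => // E; rewrite -E in Hm.
  apply: span_gen; exists (u :: hs); by rewrite /= Hs.
Qed.

Lemma brk_rbr_H us vs : allP Hvec us -> allP Hvec vs -> us <> [::] -> vs <> [::] ->
  Defs.span (Hn (size us + size vs)) (brk (rbr us) (rbr vs)).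
Proof.
elim: us vs => [|u us IH] vs //.
case: us IH => [|u' us] IH [Hu Hus] Hvs _ Hne.
- rewrite brk_iota_rbr //; apply: span_gen; exists (u :: vs); split => //.
- rewrite rbr_cons2.
  have [ku Hku] := proj2 Hu.
  have [kx Hkx] := @homog_rbr (u' :: us) Hus.
  have [ky Hky] := homog_rbr Hvs.
  rewrite (jacobi (homog_iota Hku) Hkx Hky).
  set A := Defs.iota u; set X := rbr (u' :: us); set Y := rbr vs.
  have -> : (fun w => brk A (brk X Y) w - sgn (ku * kx) * brk X (brk A Y) w) =
            lincomb (- sgn (ku * kx)) (brk X (brk A Y)) (brk A (brk X Y)).
    by apply: functional_extensionality => w; rewrite /lincomb; ring.
  apply: (proj2 (span_sub _)).
  + rewrite /Y brk_iota_rbr //.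
    have := IH (u :: vs) Hus (conj Hu Hvs) (@cons_nnil _ _ _) (@cons_nnil _ _ _).
    by rewrite /= addnS addSn.
  + have := IH vs Hus Hvs (@cons_nnil _ _ _) Hne.
    rewrite /= addSn => H; apply: brkA_span => //.
Qed.

Lemma isV_decomp v : isV v -> exists ks : seq int,
  allP (fun k => Hvec (projv k v)) ks /\ forall b, v b = \sum_(k <- ks) projv k v b.
Proof.
move=> [s Hs]; exists (undup (map deg s)); split.
- apply/(allP_nth _ 0) => i _; split.
  + exists s => b Hb; rewrite /projv Hs //; by case: ifP.
  + exists (nth 0 (undup [seq deg i | i <- s]) i) => b; rewrite /projv.
    by case: ifP => [/eqP E _|_]; rewrite ?eqxx.
- move=> b; rewrite /projv.
  case Hb: (b \in s).
  + rewrite sum_if1 ?undup_uniq // mem_undup; apply/mapP; by exists b.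
  + by rewrite Hs ?Hb // big1 // => k _; case: ifP.
Qed.

Lemma iota_span v : isV v -> Defs.span (Hn 1) (Defs.iota v).
Proof.
move=> /isV_decomp [ks [Hks Ev]].
have -> : Defs.iota v = fun w => \sum_(k <- ks) Defs.iota (projv k v) w.
  apply: functional_extensionality => [[|b [|c w]]] /=; try by rewrite big1.
  by rewrite Ev.
apply: subsp_sumseq; first exact: span_sub.
apply: allP_impl Hks => k Hk; apply: span_gen; by exists [:: projv k v].
Qed.

Lemma rbr_spanH vs : allP (@isV B) vs -> vs <> [::] -> Defs.span (Hn (size vs)) (rbr vs).
Proof.
elim: vs => [|v vs IH] //.
case: vs IH => [|v' vs] IH [Hv Hs] _; first exact: iota_span.
rewrite rbr_cons2.
have := brk_span (iota_span Hv) (IH Hs (@cons_nnil _ _ _)).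
apply: span_mono2 => h [p [q [[us [Hus [Hp ->]]] [[hs [Hhs [Hq ->]]] ->]]]].
case: us Hus Hp => [|u [|? ?]] //= _ [Hu _].
rewrite brk_iota_rbr; last by case: hs Hhs {Hq}.
apply: span_gen; exists (u :: hs); by rewrite /= Hhs.
Qed.

Lemma Lie0 g : Lie 0 g -> g = z0.
Proof.
apply: (span_ind (S := fun g => g = z0)).
- split => // a f g' -> ->; apply: functional_extensionality => w; rewrite /lincomb /zeroT; ring.
- by move=> h [[|? ?] [//= _ [_ ->]]].
Qed.

Lemma Lie_spanH n g : (0 < n)%N -> Lie n g -> Defs.span (Hn n) g.
Proof.
move=> Hn0; apply: span_mono2 => h [vs [Hs [Hv ->]]]; subst n.
apply: rbr_spanH.
- exact: (proj1 (allP_nth (@isV B) (@zeroV B) vs) Hv).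
- by case: vs Hn0 {Hv}.
Qed.

Lemma spanH_Lie n g : Defs.span (Hn n) g -> Lie n g.
Proof.
apply: span_mono2 => h [vs [Hs [Hv ->]]].
apply: span_gen; exists vs; split => //; split => //.
subst n; apply: (proj2 (allP_nth (@isV B) (@zeroV B) vs)); by apply: allP_impl Hv => x [].
Qed.

Lemma Lie_sub n : subsp (Lie n).
Proof. exact: span_sub. Qed.

Lemma Lie_brk a b f g : Lie a f -> Lie b g -> Lie (a + b) (brk f g).
Proof.
case: a => [|a]; first by move/Lie0 => -> _; rewrite brk0l; exact: subsp_zero (Lie_sub _).
case: b => [|b]; first by move=> _ /Lie0 ->; rewrite brk0r; exact: subsp_zero (Lie_sub _).
move=> /(@Lie_spanH a.+1 _ isT) Hf /(@Lie_spanH b.+1 _ isT) Hg.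
apply: spanH_Lie.
have := brk_span Hf Hg.
apply: span_mono2 => h [p [q [[us [Hus [Hp ->]]] [[vs [Hvs [Hq ->]]] ->]]]].
rewrite -Hus -Hvs; apply: brk_rbr_H => //.
- by case: us Hus {Hp}.
- by case: vs Hvs {Hq}.
Qed.

Lemma Lie_lenH n g : Lie n g -> lenH n g.
Proof.
apply: span_ind.
- split; first by move=> w; rewrite /zeroT eqxx.
  move=> a f g' Hf Hg w; rewrite /lincomb.
  case: (eqVneq (f w) 0) => [E|E]; last by move=> _; exact: Hf.
  by rewrite E mulr0 add0r; exact: Hg.
- move=> h [vs [<- [_ ->]]]; exact: lenH_rbr.
Qed.

Lemma projd_homog k k' h : homog k' h -> projd k h = if k' == k then h else z0.
Proof.
move=> Hh; apply: functional_extensionality => w; rewrite /projd.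
case: (eqVneq (h w) 0) => [E|E]; first by rewrite E; case: ifP; case: ifP.
rewrite (Hh _ E); by case: ifP.
Qed.

Lemma Lie_projd n k g : Lie n g -> Lie n (projd k g).
Proof.
have P0 : projd k z0 = z0 by apply: functional_extensionality => w; rewrite /projd /zeroT; case: ifP.
case: n => [|n]; first by move/Lie0 => ->; rewrite P0; exact: subsp_zero (Lie_sub _).
move/(@Lie_spanH n.+1 _ isT).
apply: (span_ind (S := fun g => Lie n.+1 (projd k g))).
- split; first by rewrite P0; exact: subsp_zero (Lie_sub _).
  move=> a f g' Hf Hg.
  have -> : projd k (lincomb a f g') = lincomb a (projd k f) (projd k g').
    apply: functional_extensionality => w; rewrite /projd /lincomb; case: ifP => _ //; ring.
  exact: (proj2 (Lie_sub _)).
- move=> h Hh; have [vs [Hs [Hv Eh]]] := Hh.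
  have [k' Hk'] := homog_rbr Hv; rewrite -Eh in Hk'.
  rewrite (projd_homog k Hk'); case: ifP => _.
  + apply: spanH_Lie; exact: span_gen.
  + exact: subsp_zero (Lie_sub _).
Qed.

Lemma trunc_lincomb n a (f g : TT) : Defs.trunc n (lincomb a f g) = lincomb a (Defs.trunc n f) (Defs.trunc n g).
Proof. apply: functional_extensionality => w; rewrite /Defs.trunc /lincomb; case: ifP => _; ring. Qed.

Lemma trunc_zero n : Defs.trunc n z0 = z0.
Proof. apply: functional_extensionality => w; rewrite /Defs.trunc /zeroT; by case: ifP. Qed.

Lemma lincomb_zero (a : rat) : lincomb a z0 z0 = z0.
Proof. apply: functional_extensionality => w; rewrite /lincomb /zeroT; ring. Qed.

Lemma isL_zero : isL z0.
Proof.
split; first by move=> n; rewrite trunc_zero; exact: subsp_zero (Lie_sub _).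
by exists [::] => w; rewrite /zeroT eqxx.
Qed.

Lemma isL_lincomb a f g : isL f -> isL g -> isL (lincomb a f g).
Proof.
move=> [Hf [ks1 K1]] [Hg [ks2 K2]]; split.
- move=> n; rewrite trunc_lincomb; apply: (proj2 (Lie_sub _)); [exact: Hf | exact: Hg].
- exists (ks1 ++ ks2) => w; rewrite /lincomb mem_cat.
  case: (eqVneq (f w) 0) => [E|E]; last by rewrite K1.
  by rewrite E mulr0 add0r => /K2 ->; rewrite orbT.
Qed.

Lemma isL_sub : subsp isL.
Proof. split; [exact: isL_zero | move=> a f g; exact: isL_lincomb]. Qed.

Lemma agree_brk f f' g g' w :
  (forall u, (size u <= size w)%N -> f u = f' u) ->
  (forall u, (size u <= size w)%N -> g u = g' u) -> brk f g w = brk f' g' w.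
Proof.
move=> Hf Hg; apply: eq_bigr => i _.
have H1 : (size (take i w) <= size w)%N by rewrite size_take_min geq_minr.
have H2 : (size (drop i w) <= size w)%N by rewrite size_drop leq_subr.
by rewrite !Hf // !Hg.
Qed.

Lemma allP_all {A : Type} (P : A -> Prop) s : (forall x, P x) -> allP P s.
Proof. by move=> H; elim: s => //= x s IH; split. Qed.

Definition fsum (F : nat -> TT) m : TT := fun w => \sum_(0 <= a < m) F a w.

Lemma trunc_fsum f n w : (size w <= n)%N -> fsum (fun a => Defs.trunc a f) n.+1 w = f w.
Proof.
move=> Hw; rewrite /fsum /Defs.trunc sum_if1 //; first exact: iota_uniq.
by rewrite mem_index_iota ltnS Hw.
Qed.

Lemma brk_fsum (S : TT -> Prop) F G m m' : subsp S -> (forall a b, S (brk (F a) (G b))) ->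
  S (brk (fsum F m) (fsum G m')).
Proof.
move=> HS H.
have HS' : subsp (fun f => S (brk f (fsum G m'))).
  split; first by rewrite brk0l; exact: subsp_zero.
  move=> a f g Hf Hg; rewrite brk_linl; exact: (proj2 HS).
apply: (subsp_sumseq HS'); apply: allP_all => a.
have HS'' : subsp (fun g => S (brk (F a) g)).
  split; first by rewrite brk0r; exact: subsp_zero.
  move=> c f g Hf Hg; rewrite brk_linr; exact: (proj2 HS).
apply: (subsp_sumseq HS''); apply: allP_all => b; exact: H.
Qed.

Lemma trunc_lenH m n X : lenH m X -> Defs.trunc n X = if m == n then X else z0.
Proof.
move=> HX; apply: functional_extensionality => w; rewrite /Defs.trunc /zeroT.
case: (eqVneq (X w) 0) => [E|E]; first by rewrite E; do 2 case: ifP.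
rewrite (HX _ E); by case: ifP.
Qed.

Lemma Lie_trunc m n X : Lie m X -> Lie n (Defs.trunc n X).
Proof.
move=> HX; rewrite (trunc_lenH n (Lie_lenH HX)).
case: eqP => [<- //|_]; exact: subsp_zero (Lie_sub _).
Qed.

Lemma isL_brk f g : isL f -> isL g -> isL (brk f g).
Proof.
move=> [Hf [ks1 K1]] [Hg [ks2 K2]]; split.
- move=> n.
  have -> : Defs.trunc n (brk f g) = Defs.trunc n (brk (fsum (fun a => Defs.trunc a f) n.+1) (fsum (fun a => Defs.trunc a g) n.+1)).
    apply: functional_extensionality => w; rewrite /Defs.trunc; case: eqP => // E.
    by apply: agree_brk => u Hu; rewrite trunc_fsum // -E.
  apply: (brk_fsum (S := fun h => Lie n (Defs.trunc n h))).
  + split; first by rewrite trunc_zero; exact: subsp_zero (Lie_sub _).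
    move=> a u v Hu Hv; rewrite trunc_lincomb; exact: (proj2 (Lie_sub _)).
  + move=> a b; apply: Lie_trunc; exact: Lie_brk.
- exists [seq x + y | x <- ks1, y <- ks2] => w /brk_nz [i [[A C]|[A C]]];
    rewrite -(cat_take_drop i w) wdeg_cat.
  + by apply: allpairs_f; [exact: K1 | exact: K2].
  + rewrite addrC; by apply: allpairs_f; [exact: K1 | exact: K2].
Qed.

Lemma isL_iota v : isV v -> isL (Defs.iota v).
Proof.
move=> Hv; split.
- move=> n; apply: (@Lie_trunc 1); apply: span_gen; exists [:: v]; split => //; split => //.
  by case.
- case: Hv => s Hs; exists (map deg s) => [[|b [|c w]]] //=; rewrite ?eqxx //.
  move=> Hb; rewrite /Defs.wdeg big_seq1; apply: map_f.
  case: (boolP (b \in s)) => // /Hs E; by rewrite E eqxx in Hb.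
Qed.

Lemma isL_rbr vs : allP (@isV B) vs -> isL (rbr vs).
Proof.
elim: vs => [|v vs IH]; first by move=> _; exact: isL_zero.
case: vs IH => [|v' vs] IH [Hv Hs]; first exact: isL_iota.
rewrite rbr_cons2; apply: isL_brk; [exact: isL_iota | exact: IH].
Qed.

Lemma Lie_isL n g : Lie n g -> isL g.
Proof.
apply: span_ind; first exact: isL_sub.
move=> h [vs [Hs [Hv ->]]]; apply: isL_rbr; subst n.
exact: (proj1 (allP_nth (@isV B) (@zeroV B) vs) Hv).
Qed.

Lemma isL_nil f : isL f -> f [::] = 0.
Proof.
move=> [H _]; have := Lie0 (H 0%N) => /(congr1 (fun F => F [::])).
by rewrite /Defs.trunc.
Qed.

Lemma isL_projd k f : isL f -> isL (projd k f).
Proof.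
move=> [Hf _]; split.
- move=> n.
  have -> : Defs.trunc n (projd k f) = projd k (Defs.trunc n f).
    by apply: functional_extensionality => w; rewrite /Defs.trunc /projd; do 2 case: ifP.
  exact: Lie_projd.
- exists [:: k] => w; rewrite /projd inE; by case: ifP; rewrite ?eqxx.
Qed.

Lemma Lge_sub n : subsp (Lge n).
Proof.
split.
- split; [exact: isL_zero | by []].
- move=> a f g [Hf Vf'] [Hg Vg]; split; first exact: isL_lincomb.
  by move=> w Hw; rewrite /lincomb Vf' // Vg // mulr0 addr0.
Qed.

Lemma Lge_mono m n f : (m <= n)%N -> Lge n f -> Lge m f.
Proof. move=> Hmn [Hf Vf']; split => // w Hw; apply: Vf'; exact: leq_trans Hw Hmn. Qed.

Lemma Lge_brk a b f g : Lge a f -> Lge b g -> Lge (a + b) (brk f g).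
Proof.
move=> [Hf Vf'] [Hg Vg]; split; first exact: isL_brk.
move=> w Hw; rewrite /Defs.brk big1 // => i; try move=> _.
have H1 : size (take i w) = minn i (size w) by rewrite size_take_min.
have H2 : size (drop i w) = (size w - i)%N by rewrite size_drop.
have [Ha|Ha] := ltnP (size (take i w)) a.
- rewrite (Vf' (take i w)) // mul0r.
  have [Hb|Hb] := ltnP (size (take i w)) b; first by rewrite Vg // mulr0 mul0r subr0.
  rewrite (Vf' (drop i w)) ?mulr0 ?subr0 //; rewrite H2; move: Hw Hb Ha; rewrite H1; lia.
- rewrite (Vg (drop i w)) ?mulr0; last by rewrite H2; move: Hw Ha; rewrite H1; lia.
  have [Hb|Hb] := ltnP (size (take i w)) b; first by rewrite Vg // mulr0 mul0r subr0.
  rewrite (Vf' (drop i w)) ?mulr0 ?subr0 //; rewrite H2; move: Hw Hb Ha; rewrite H1; lia.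
Qed.

Lemma Lie_Lge n g : Lie n g -> Lge n g.
Proof.
move=> H; split; first exact: Lie_isL H.
move=> w Hw; case: (eqVneq (g w) 0) => // /(Lie_lenH H) E; by rewrite E ltnn in Hw.
Qed.

Lemma der_zero j th : isDer deg j th -> th z0 = z0.
Proof.
move=> [_ [_ [Hlin _]]].
have := Hlin (-1) z0 z0 isL_zero isL_zero; rewrite lincomb_zero => E.
apply: functional_extensionality => w; have := congr1 (fun F => F w) E.
rewrite /lincomb /zeroT => ->; ring.
Qed.

Lemma der_degrees j th ks : isDer deg j th -> forall f, isL f ->
  (forall w, f w != 0 -> wdeg w \in ks) ->
  forall w, th f w != 0 -> wdeg w \in map (fun k => k + j) ks.
Proof.
move=> Hth; have [Hl [Hh [Hlin _]]] := Hth.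
elim: ks => [|k ks IH] f Hf Hks w.
- have -> : f = z0.
    apply: functional_extensionality => u; apply/eqP; apply/negP => /negP/Hks.
    by rewrite in_nil.
  by rewrite (der_zero Hth) /zeroT eqxx.
- pose P := projd k f; pose R := lincomb (-1) P f.
  have HP : isL P := isL_projd k Hf.
  have HR : isL R := isL_lincomb (-1) HP Hf.
  have Ef : f = lincomb 1 P R.
    by apply: functional_extensionality => u; rewrite /R /lincomb; ring.
  have E2 := Hlin 1 P R HP HR; rewrite -Ef in E2; rewrite E2 /lincomb mul1r.
  case: (eqVneq (th P w) 0) => [E|E].
  + rewrite E add0r => HRw; rewrite map_cons in_cons; apply/orP; right.
    apply: (IH R HR) HRw => u; rewrite /R /lincomb /P /projd.
    case: ifP => [_|/negbT Hu]; first by rewrite mulN1r addNr eqxx.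
    rewrite mulr0 add0r => /Hks; rewrite in_cons (negbTE Hu) //.
  + move=> _; rewrite map_cons in_cons; apply/orP; left.
    have HPk : homog k P by move=> u; rewrite /P /projd; case: ifP => [/eqP //|]; rewrite eqxx.
    by rewrite (Hh k P HP HPk w E).
Qed.
Variable Vf : nat -> vec B -> Prop.
Variable q : nat.
Hypothesis Hq : (0 < q)%N.
Hypothesis HV0 : forall v, Vf 0%N v <-> isV v.
Hypothesis Hdec : forall a v, Vf a.+1 v -> Vf a v.

Local Notation Ft := (Defs.Ft deg Vf q).
Local Notation Fnp := (Defs.Fnp deg Vf).
Local Notation Lnp := (Defs.Lnp deg Vf).

Definition cc n := ((n.-1 * n) %/ 2 * q)%N.

Lemma cc_succ n : cc n.+1 = (cc n + n * q)%N.
Proof.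
rewrite /cc; case: n => [|m] /=; first by rewrite !(mul0n, muln0, div0n).
have E : (m.+1 * m.+2 = m.+1 * 2 + m * m.+1)%N by lia.
by rewrite E divnMDl // mulnDl addnC.
Qed.

Lemma cc_mono m n : (m <= n)%N -> (cc m <= cc n)%N.
Proof.
move=> H; elim: n H => [|n IH]; first by rewrite leqn0 => /eqP ->.
rewrite leq_eqVlt => /orP [/eqP -> //|]; rewrite ltnS => /IH H.
by rewrite cc_succ; apply: leq_trans H (leq_addr _ _).
Qed.

Lemma cc_ge n : (n <= cc n.+1)%N.
Proof.
elim: n => [|n IH] //; rewrite cc_succ.
have : (n.+1 <= n.+1 * q)%N by rewrite leq_pmulr.
lia.
Qed.

Lemma decode t : exists n p, (0 < n)%N /\ (p < n * q)%N /\ t = (cc n + p)%N.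
Proof.
elim: t => [|t [n [p [Hn [Hp E]]]]].
- exists 1%N, 0%N; split => //; split; first by rewrite mul1n.
  by rewrite /cc.
- case: (ltnP p.+1 (n * q)) => H.
  + exists n, p.+1; split => //; split => //; by rewrite E addnS.
  + have Ep : p.+1 = (n * q)%N by apply/eqP; rewrite eqn_leq H Hp.
    exists n.+1, 0%N; split => //; split; first by rewrite muln_gt0 Hq.
    by rewrite cc_succ E addn0 -Ep addnS.
Qed.

Lemma cc_lt n n' p : (n < n')%N -> (p < n * q)%N -> (cc n + p < cc n')%N.
Proof.
move=> Hn Hp; apply: (@leq_trans (cc n.+1)); last exact: cc_mono.
by rewrite cc_succ ltn_add2l.
Qed.

Lemma decode_uniq n p n' p' : (p < n * q)%N -> (p' < n' * q)%N ->
  (cc n + p = cc n' + p')%N -> n = n' /\ p = p'.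
Proof.
move=> Hp Hp' E.
have En : n = n'.
  case: (ltngtP n n') => // H.
  - have := cc_lt H Hp; rewrite E; lia.
  - have := cc_lt H Hp'; rewrite -E; lia.
subst n'; split => //; lia.
Qed.

Lemma Ft_np t n p f : Ft t f -> (0 < n)%N -> (p < n * q)%N -> t = (cc n + p + 1)%N -> Fnp n p f.
Proof.
move=> [n' [p' [Hn' [Hp' [Et HF]]]]] Hn Hp E.
have [<- <-] : n' = n /\ p' = p.
  apply: decode_uniq => //; move: Et; rewrite E /cc; lia.
exact: HF.
Qed.

Lemma Ft_intro t n p f : (0 < n)%N -> (p < n * q)%N -> t = (cc n + p + 1)%N -> Fnp n p f -> Ft t f.
Proof. move=> Hn Hp E HF; exists n, p; split => //; split => //; split => //. Qed.

Lemma Fnp_lincomb n p a f g : Fnp n p f -> Fnp n p g -> Fnp n p (lincomb a f g).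
Proof.
move=> [Hf1 Hf2] [Hg1 Hg2]; split; first exact: (proj2 (Lge_sub _)).
rewrite trunc_lincomb; exact: (proj2 (span_sub _)).
Qed.

Lemma Fnp_zero n p : Fnp n p z0.
Proof.
split; first exact: (proj1 (Lge_sub _)).
rewrite trunc_zero; exact: (proj1 (span_sub _)).
Qed.

Lemma Vf_anti a b v : (b <= a)%N -> Vf a v -> Vf b v.
Proof.
move=> H; elim: a H => [|a IH]; first by rewrite leqn0 => /eqP ->.
rewrite leq_eqVlt => /orP [/eqP -> //|]; rewrite ltnS => /IH H /Hdec; exact: H.
Qed.

Lemma dec_list p (al : seq nat) : sumn al = p.+1 -> exists al' : seq nat,
  size al' = size al /\ sumn al' = p /\ forall i, (nth 0 al' i <= nth 0 al i)%N.
Proof.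
elim: al p => [|a al IH] p //=.
case: a => [|a] /=.
- rewrite add0n => /IH [al' [H1 [H2 H3]]]; exists (0%N :: al'); split; first by rewrite /= H1.
  split => //; by case.
- move=> [E]; exists (a :: al); split => //; split => //; by case.
Qed.

Lemma Lnp_dec n p g : Lnp n p.+1 g -> Lnp n p g.
Proof.
apply: span_mono2 => h [vs [al [Hvs [Hal [Hs [HV ->]]]]]].
have [al' [H1 [H2 H3]]] := dec_list Hs.
apply: span_gen; exists vs, al'; split => //; split; first by rewrite H1.
split => //; split => // i Hi; apply: Vf_anti (HV i Hi); exact: H3.
Qed.

Lemma Fnp_dec n p f : Fnp n p.+1 f -> Fnp n p f.
Proof. move=> [H1 H2]; split => //; exact: Lnp_dec. Qed.

Lemma Fnp_down n p f : Fnp n.+1 0 f -> Fnp n p f.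
Proof.
move=> [H1 _]; split; first exact: Lge_mono H1.
have -> : Defs.trunc n f = z0.
  apply: functional_extensionality => w; rewrite /Defs.trunc /zeroT; case: eqP => // E.
  by apply: (proj2 H1); rewrite E.
exact: (proj1 (span_sub _)).
Qed.

Lemma Ft_succ t f : (0 < t)%N -> Ft t.+1 f -> Ft t f.
Proof.
move=> Ht [n [p [Hn [Hp [E HF]]]]].
case: p Hp E HF => [|p] Hp E HF.
- case: n Hn Hp E HF => [|[|m]] //= _ Hp E HF.
  + move: E Ht; rewrite /cc /=; lia.
  + have Hmq : (0 < m.+1 * q)%N by rewrite muln_gt0 Hq.
    apply: (@Ft_intro t m.+1 (m.+1 * q).-1) => //.
    * by rewrite prednK.
    * move: E; rewrite -/(cc m.+2) cc_succ; move: Hmq; lia.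
    * exact: Fnp_down HF.
- apply: (@Ft_intro t n p) => //; first by apply: ltnW.
  + move: E; rewrite /cc; lia.
  + exact: Fnp_dec.
Qed.

Lemma Ft_mono t t' f : (0 < t)%N -> (t <= t')%N -> Ft t' f -> Ft t f.
Proof.
move=> Ht H; elim: t' H => [|t' IH]; first by rewrite leqn0 => /eqP E; rewrite E in Ht.
rewrite leq_eqVlt => /orP [/eqP -> //|]; rewrite ltnS => H HF.
apply: IH => //; apply: Ft_succ => //; exact: leq_trans Ht H.
Qed.

Lemma Ft_lincomb t a f g : Ft t f -> Ft t g -> Ft t (lincomb a f g).
Proof.
move=> Hf Hg; have [n [p [Hn [Hp [E HF]]]]] := Hf.
apply: (Ft_intro Hn Hp E); apply: Fnp_lincomb => //; exact: Ft_np Hg Hn Hp E.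
Qed.

Lemma Ft_zero t : (0 < t)%N -> Ft t z0.
Proof.
case: t => // t _; have [n [p [Hn [Hp E]]]] := decode t.
apply: (Ft_intro Hn Hp); first by rewrite E addn1.
exact: Fnp_zero.
Qed.

Lemma Ft_Lge t N f : Ft t f -> (cc N < t)%N -> Lge N f.
Proof.
move=> [n [p [Hn [Hp [E [HL _]]]]]] HN.
case: (leqP N n) => H; first exact: Lge_mono HL.
have := cc_lt H Hp; rewrite -/(cc n) in E; lia.
Qed.

Lemma Ft_isL t f : Ft t f -> isL f.
Proof. by move=> [n [p [_ [_ [_ [[H _] _]]]]]]. Qed.

Lemma isL_F1 f : isL f -> Ft 1 f.
Proof.
move=> Hf; apply: (@Ft_intro 1 1 0) => //; first by rewrite mul1n.
split.
- split => // w; rewrite ltnS leqn0 => /nilP ->; exact: isL_nil.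
- have : Lie 1 (Defs.trunc 1 f) := proj1 Hf 1%N.
  apply: span_mono2 => h [vs [Hs [Hv ->]]].
  case: vs Hs Hv => [|v [|? ?]] // _ Hv.
  apply: span_gen; exists [:: v], [:: 0%N]; split => //; split => //; split => //.
  split => //; case => // _; apply/HV0; exact: (Hv 0%N).
Qed.

Lemma Ft_agree t G G' : Ft t G' -> isL G -> (forall w, (size w <= t)%N -> G w = G' w) -> Ft t G.
Proof.
move=> [n [p [Hn [Hp [E [[_ HL] HT]]]]]] HG Hag.
have Hnt : (n <= t)%N.
  rewrite E; case: n Hn {Hp E HL HT} => // n _; have := cc_ge n; rewrite -/(cc n.+1); lia.
apply: (Ft_intro Hn Hp E); split.
- split => // w Hw; rewrite Hag; [exact: HL | apply: leq_trans Hnt; exact: ltnW].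
- have -> : Defs.trunc n G = Defs.trunc n G'.
    apply: functional_extensionality => w; rewrite /Defs.trunc; case: eqP => // Hs.
    by rewrite Hag // Hs.
  exact: HT.
Qed.
Variable d : T B -> T B.
Hypothesis Hd : is_cdgl_diff deg d.
Hypothesis Hmin : minimal deg d.

Lemma homog_lincomb k a f g : homog k f -> homog k g -> homog k (lincomb a f g).
Proof.
move=> hf hg w; rewrite /lincomb.
case: (eqVneq (f w) 0) => [E|E]; last by move=> _; exact: hf.
by rewrite E mulr0 add0r; exact: hg.
Qed.

Lemma Lie_rbr vs : allP (@isV B) vs -> Lie (size vs) (rbr vs).
Proof.
move=> H; apply: span_gen; exists vs; split => //; split => //.
exact: (proj2 (allP_nth (@isV B) (@zeroV B) vs)).
Qed.

Lemma dH vs : allP Hvec vs -> vs <> [::] -> Lge (size vs).+1 (d (rbr vs)).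
Proof.
have [[Hl [Hh [Hlin Hb]]] [_ HdL]] := Hd.
elim: vs => [|v vs IH] //.
case: vs IH => [|v' vs] IH [Hv Hs] _.
- exact: Hmin (proj1 Hv).
- rewrite rbr_cons2.
  have [k Hk] := proj2 Hv.
  have HA : isL (Defs.iota v) := isL_iota (proj1 Hv).
  have HsV : allP (@isV B) (v' :: vs) := @allP_impl _ Hvec (@isV B) (v' :: vs) (fun x H => proj1 H) Hs.
  have HY : isL (rbr (v' :: vs)) := isL_rbr HsV.
  have HLA : Lie 1 (Defs.iota v) := (@Lie_rbr [:: v] (conj (proj1 Hv) I)).
  have HLY := Lie_rbr HsV.
  rewrite (Hb k _ _ HA (homog_iota Hk) HY).
  have -> : (fun w => brk (d (Defs.iota v)) (rbr (v' :: vs)) w + sgn (-1 * k) * brk (Defs.iota v) (d (rbr (v' :: vs))) w)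
    = lincomb (sgn (-1 * k)) (brk (Defs.iota v) (d (rbr (v' :: vs)))) (brk (d (Defs.iota v)) (rbr (v' :: vs))).
    by apply: functional_extensionality => w; rewrite /lincomb addrC.
  apply: (proj2 (Lge_sub _)).
  + apply: (Lge_mono _ (Lge_brk (Lie_Lge HLA) (IH Hs (@cons_nnil _ _ _)))); rewrite /=; lia.
  + apply: (Lge_mono _ (Lge_brk (Hmin (proj1 Hv)) (Lie_Lge HLY))); rewrite /=; lia.
Qed.

Lemma dLie n g : (0 < n)%N -> Lie n g -> Lge n.+1 (d g).
Proof.
have HD := proj1 Hd; have [Hl [Hh [Hlin Hb]]] := HD.
move=> Hn0 /(Lie_spanH Hn0) H.
suff: isL g /\ Lge n.+1 (d g) by case.
apply: (span_ind (S := fun g => isL g /\ Lge n.+1 (d g))) H.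
- split.
  + split; first exact: isL_zero.
    rewrite (der_zero HD); exact: (proj1 (Lge_sub _)).
  + move=> a f g' [Hf Hdf] [Hg Hdg]; split; first exact: isL_lincomb.
    rewrite Hlin //; exact: (proj2 (Lge_sub _)).
- move=> h [vs [Hs [Hv ->]]].
  have HsV : allP (@isV B) vs by apply: allP_impl Hv => x [].
  split; first exact: isL_rbr.
  rewrite -Hs; apply: dH => //; by case: vs Hs {Hv HsV} => // E; rewrite -E in Hn0.
Qed.

Lemma d_Ft t f : Ft t f -> Ft t (d f).
Proof.
have HD := proj1 Hd; have [Hl [Hh [Hlin Hb]]] := HD.
have HdL := proj2 (proj2 Hd).
move=> [n [p [Hn [Hp [E [[Hf HL] HT]]]]]].
apply: (Ft_intro Hn Hp E).
have HTL : Lie n (Defs.trunc n f) := proj1 Hf n.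
have HTi : isL (Defs.trunc n f) := Lie_isL HTL.
pose R := lincomb (-1) (Defs.trunc n f) f.
have HR : isL R := isL_lincomb (-1) HTi Hf.
have HRL : Lge n.+1 R.
  split => // w Hw; rewrite /R /lincomb /Defs.trunc; case: eqP => Es; first ring.
  rewrite mulr0 add0r; apply: HL; move: Hw Es; lia.
have Ef : f = lincomb 1 (Defs.trunc n f) R.
  by apply: functional_extensionality => w; rewrite /R /lincomb; ring.
have E2 := Hlin 1 _ _ HTi HR; rewrite -Ef in E2.
have HdfL : Lge n.+1 (d f).
  rewrite E2; apply: (proj2 (Lge_sub _)); [exact: dLie Hn HTL | exact: HdL].
split; first exact: Lge_mono (leqnSn n) HdfL.
have -> : Defs.trunc n (d f) = z0.
  apply: functional_extensionality => w; rewrite /Defs.trunc /zeroT; case: eqP => // Es.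
  by apply: (proj2 HdfL); rewrite Es.
exact: (proj1 (span_sub _)).
Qed.
Local Notation Fder := (Defs.Fder deg Vf q).
Local Notation isDer := (Defs.isDer deg).

Lemma isDer_zero j : isDer j (fun _ => z0).
Proof.
split; first by move=> _ _; exact: isL_zero.
split; first by move=> k f _ _; exact: homog_zero.
split; first by move=> a f g _ _; rewrite lincomb_zero.
move=> k f g _ _ _; rewrite brk0l brk0r.
by apply: functional_extensionality => w; rewrite /zeroT; ring.
Qed.

Lemma isDer_lincomb j c th et : isDer j th -> isDer j et -> isDer j (dlincomb c th et).
Proof.
move=> [Hl1 [Hh1 [Hlin1 Hb1]]] [Hl2 [Hh2 [Hlin2 Hb2]]]; rewrite /dlincomb.
split; first by move=> f Hf; apply: isL_lincomb; [exact: Hl1 | exact: Hl2].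
split; first by move=> k f Hf Hk; apply: homog_lincomb; [exact: Hh1 | exact: Hh2].
split.
- move=> a f g Hf Hg; rewrite Hlin1 // Hlin2 //.
  by apply: functional_extensionality => w; rewrite /lincomb; ring.
- move=> k f g Hf Hk Hg; apply: functional_extensionality => w.
  rewrite brk_linl brk_linr /lincomb (Hb1 k f g) // (Hb2 k f g) //; ring.
Qed.

Lemma dbr_eq i j (th et : TT -> TT) f :
  dbr i j th et f = lincomb (- sgn (i * j)) (et (th f)) (th (et f)).
Proof. by apply: functional_extensionality => w; rewrite /dbr /lincomb; ring. Qed.

Lemma isDer_dbr i j th et : isDer i th -> isDer j et -> isDer (i + j) (dbr i j th et).
Proof.
move=> [Hl1 [Hh1 [Hlin1 Hb1]]] [Hl2 [Hh2 [Hlin2 Hb2]]].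
split; first by move=> f Hf; rewrite dbr_eq; apply: isL_lincomb; [apply: Hl2; exact: Hl1 | apply: Hl1; exact: Hl2].
split.
  move=> k f Hf Hk; rewrite dbr_eq; apply: homog_lincomb.
  - have -> : k + (i + j) = k + i + j by ring.
    apply: Hh2; [exact: Hl1 | exact: Hh1].
  - have -> : k + (i + j) = k + j + i by ring.
    apply: Hh1; [exact: Hl2 | exact: Hh2].
split.
- move=> a f g Hf Hg; rewrite !dbr_eq (Hlin1 a f g Hf Hg) (Hlin2 a f g Hf Hg).
  rewrite (Hlin1 a (et f) (et g) (Hl2 f Hf) (Hl2 g Hg)) (Hlin2 a (th f) (th g) (Hl1 f Hf) (Hl1 g Hg)).
  by apply: functional_extensionality => w; rewrite /lincomb; ring.
- move=> k f g Hf Hk Hg.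
  have Ee : et (brk f g) = lincomb (sgn (j * k)) (brk f (et g)) (brk (et f) g).
    rewrite (Hb2 k f g Hf Hk Hg); apply: functional_extensionality => w; rewrite /lincomb; ring.
  have Et : th (brk f g) = lincomb (sgn (i * k)) (brk f (th g)) (brk (th f) g).
    rewrite (Hb1 k f g Hf Hk Hg); apply: functional_extensionality => w; rewrite /lincomb; ring.
  rewrite !dbr_eq Ee Et.
  rewrite (Hlin1 _ _ _ (isL_brk Hf (Hl2 g Hg)) (isL_brk (Hl2 f Hf) Hg)).
  rewrite (Hlin2 _ _ _ (isL_brk Hf (Hl1 g Hg)) (isL_brk (Hl1 f Hf) Hg)).
  rewrite (Hb1 k f (et g) Hf Hk (Hl2 g Hg)) (Hb1 (k + j) (et f) g (Hl2 f Hf) (Hh2 k f Hf Hk) Hg).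
  rewrite (Hb2 k f (th g) Hf Hk (Hl1 g Hg)) (Hb2 (k + i) (th f) g (Hl1 f Hf) (Hh1 k f Hf Hk) Hg).
  apply: functional_extensionality => w.
  rewrite brk_linl brk_linr /lincomb.
  rewrite (mulrDr i k j) (mulrDr j k i) (mulrDl i j k) !sgnD (mulrC j i).
  case: (sgn_pm (i * k)) => ->; case: (sgn_pm (i * j)) => ->; case: (sgn_pm (j * k)) => ->; ring.
Qed.

Lemma Fder_zero n j : Fder n j (fun _ => z0).
Proof. split; first exact: isDer_zero. move=> r f Hr _; apply: Ft_zero; by rewrite addn_gt0 Hr orbT. Qed.

Lemma Fder_lincomb n j c th et : Fder n j th -> Fder n j et -> Fder n j (dlincomb c th et).
Proof.
move=> [D1 F1] [D2 F2]; split; first exact: isDer_lincomb.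
move=> r f Hr Hf; rewrite /dlincomb; apply: Ft_lincomb; [exact: F1 | exact: F2].
Qed.

Lemma Fder_mono n j th : (0 < n)%N -> Fder n.+1 j th -> Fder n j th.
Proof.
move=> Hn [D F]; split => // r f Hr Hf; apply: (Ft_mono _ _ (F r f Hr Hf)).
- by rewrite addn_gt0 Hn.
- by rewrite addSn.
Qed.

Lemma Fder_dbr n m i j th et : Fder n i th -> Fder m j et -> Fder (n + m) (i + j) (dbr i j th et).
Proof.
move=> [D1 F1] [D2 F2]; split; first exact: isDer_dbr.
move=> r f Hr Hf; rewrite dbr_eq; apply: Ft_lincomb.
- rewrite (addnC n m) -addnA; apply: F2; [by rewrite addn_gt0 Hr orbT | exact: F1].
- rewrite -addnA; apply: F1; [by rewrite addn_gt0 Hr orbT | exact: F2].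
Qed.

Lemma Fder_dbr_d n j th : Fder n j th -> Fder n (-1 + j) (dbr (-1) j d th).
Proof.
move=> [D F]; split; first exact: isDer_dbr (proj1 Hd) D.
move=> r f Hr Hf; rewrite dbr_eq; apply: Ft_lincomb.
- apply: F => //; exact: d_Ft.
- apply: d_Ft; exact: F.
Qed.

Lemma Fder_inj j th : (forall n, (0 < n)%N -> Fder n j th) -> forall f, isL f -> th f = z0.
Proof.
move=> H f Hf; apply: functional_extensionality => w.
have HF := isL_F1 Hf.
have [_ F] := H (cc (size w).+1).+1 isT.
have [_ HL] := Ft_Lge (N := (size w).+1) (F 1%N f isT HF) (ltac:(lia)).
exact: HL.
Qed.
Definition Nw L := (cc L.+1).+1.
Definition limTh (th : nat -> TT -> TT) (f : TT) : TT := fun w => th (Nw (size w)) f w.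

Lemma Nw_mono a b : (a <= b)%N -> (Nw a <= Nw b)%N.
Proof. by move=> H; rewrite /Nw ltnS; apply: cc_mono. Qed.

Lemma Fder_mono' n m j th : (0 < n)%N -> (n <= m)%N -> Fder m j th -> Fder n j th.
Proof.
move=> Hn H; elim: m H => [|m IH]; first by rewrite leqn0 => /eqP E; rewrite E in Hn.
rewrite leq_eqVlt => /orP [/eqP -> //|]; rewrite ltnS => H HF.
apply: IH => //; apply: Fder_mono => //; exact: leq_trans Hn H.
Qed.

Lemma Fder_limit j (th : nat -> TT -> TT) :
  (forall n, (0 < n)%N -> Fder 1 j (th n)) ->
  (forall n, (0 < n)%N -> Fder n j (dlincomb (-1) (th n) (th n.+1))) ->
  exists Th, Fder 1 j Th /\ forall n, (0 < n)%N -> Fder n j (dlincomb (-1) (th n) Th).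
Proof.
move=> H1 H2.
have Tele : forall n k, (0 < n)%N -> Fder n j (dlincomb (-1) (th n) (th (n + k)%N)).
  move=> n k Hn; elim: k => [|k IH].
  - have -> : dlincomb (-1) (th n) (th (n + 0)%N) = (fun _ => z0).
      rewrite addn0; apply: functional_extensionality => f.
      apply: functional_extensionality => w; rewrite /dlincomb /lincomb /zeroT; ring.
    exact: Fder_zero.
  - have -> : dlincomb (-1) (th n) (th (n + k.+1)%N) =
       dlincomb 1 (dlincomb (-1) (th n) (th (n + k)%N)) (dlincomb (-1) (th (n + k)%N) (th (n + k).+1)).
      rewrite addnS; apply: functional_extensionality => f.
      apply: functional_extensionality => w; rewrite /dlincomb /lincomb; ring.
    apply: Fder_lincomb => //; apply: (Fder_mono' Hn (leq_addr _ _)); apply: H2.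
    by rewrite addn_gt0 Hn.
have D : forall n, (0 < n)%N -> isDer j (th n) by move=> n Hn; exact: proj1 (H1 n Hn).
have K : forall f, isL f -> forall n m L, (0 < n)%N -> (Nw L <= n)%N -> (n <= m)%N ->
    forall w, (size w <= L)%N -> th m f w = th n f w.
  move=> f Hf n m L Hn HL Hnm w Hw.
  have [_ F] := Tele n (m - n)%N Hn.
  have HG := F 1%N f isT (isL_F1 Hf).
  have [_ HLg] := Ft_Lge (N := L.+1) HG (ltac:(rewrite /Nw in HL; lia)).
  have := HLg w (ltac:(lia)); rewrite subnKC // /dlincomb /lincomb => E.
  have E' : th m f w = th n f w + (-1 * th n f w + th m f w) by ring.
  by rewrite E' E addr0.
have Th_eq : forall f, isL f -> forall m L w, (Nw L <= m)%N -> (size w <= L)%N ->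
    limTh th f w = th m f w.
  move=> f Hf m L w HL Hw; rewrite /limTh; symmetry.
  apply: (K f Hf _ _ (size w)) => //; apply: leq_trans HL; exact: Nw_mono.
have DTh : isDer j (limTh th).
  split.
  - move=> f Hf; split.
    + move=> n.
      have -> : Defs.trunc n (limTh th f) = Defs.trunc n (th (Nw n) f).
        apply: functional_extensionality => w; rewrite /Defs.trunc; case: eqP => // Es.
        apply: (Th_eq f Hf _ n) => //; by rewrite Es.
      exact: (proj1 ((proj1 (D (Nw n) isT)) f Hf)) n.
    + have [_ [ks Hks]] := Hf; exists (map (fun k => k + j) ks) => w Hw.
      exact: (der_degrees (D (Nw (size w)) isT) Hf Hks Hw).
  split.
  - move=> k f Hf Hk w Hw; exact: (proj1 (proj2 (D (Nw (size w)) isT)) k f Hf Hk w Hw).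
  split.
  - move=> a f g Hf Hg; apply: functional_extensionality => w.
    by rewrite /limTh (proj1 (proj2 (proj2 (D (Nw (size w)) isT))) a f g Hf Hg).
  - move=> k f g Hf Hk Hg; apply: functional_extensionality => w.
    rewrite {1}/limTh (proj2 (proj2 (proj2 (D (Nw (size w)) isT))) k f g Hf Hk Hg) /=.
    congr (_ + _ * _); apply: agree_brk => u Hu //; symmetry; exact: (Th_eq _ _ _ (size w)).
exists (limTh th); split.
- split => // r f Hr Hf.
  have Hfl := Ft_isL Hf.
  apply: (Ft_agree (G' := th (Nw (1 + r)%N) f)).
  + exact: (proj2 (H1 (Nw (1 + r)%N) isT)) r f Hr Hf.
  + exact: (proj1 DTh).
  + move=> w Hw; exact: (Th_eq f Hfl _ (1 + r)%N).
- move=> n Hn; split; first by apply: isDer_lincomb => //; exact: D.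
  move=> r f Hr Hf; rewrite /dlincomb.
  have Hfl := Ft_isL Hf.
  pose M := maxn n (Nw (n + r)%N).
  have HnM : (n <= M)%N by rewrite leq_maxl.
  have [_ F] := Tele n (M - n)%N Hn; rewrite subnKC // in F.
  apply: (Ft_agree (G' := lincomb (-1) (th n f) (th M f))).
  + exact: (F r f Hr Hf).
  + apply: isL_lincomb; [exact: (proj1 (D n Hn)) | exact: (proj1 DTh)].
  + move=> w Hw; rewrite /lincomb (Th_eq f Hfl M (n + r)%N) //; exact: leq_maxr.
Qed.
Lemma main_all :
  (forall n j, Defs.Fder deg Vf q n j (fun _ => @zeroT B)) /\
  (forall n j (c : rat) th et, Defs.Fder deg Vf q n j th -> Defs.Fder deg Vf q n j et ->
      Defs.Fder deg Vf q n j (dlincomb c th et)) /\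
  (forall n j th, (0 < n)%N -> Defs.Fder deg Vf q n.+1 j th -> Defs.Fder deg Vf q n j th) /\
  (forall n m i j th et, (0 < n)%N -> (0 < m)%N ->
      Defs.Fder deg Vf q n i th -> Defs.Fder deg Vf q m j et ->
      Defs.Fder deg Vf q (n + m) (i + j) (dbr i j th et)) /\
  (forall n j th, (0 < n)%N -> Defs.Fder deg Vf q n j th ->
      Defs.Fder deg Vf q n (-1 + j) (dbr (-1) j d th)) /\
  (forall j th, (forall n, (0 < n)%N -> Defs.Fder deg Vf q n j th) ->
      forall f, Defs.isL deg f -> th f = @zeroT B) /\
  (forall j (th : nat -> T B -> T B),
      (forall n, (0 < n)%N -> Defs.Fder deg Vf q 1 j (th n)) ->
      (forall n, (0 < n)%N ->
         Defs.Fder deg Vf q n j (dlincomb (-1) (th n) (th n.+1))) ->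
      exists Th, Defs.Fder deg Vf q 1 j Th /\
        forall n, (0 < n)%N -> Defs.Fder deg Vf q n j (dlincomb (-1) (th n) Th)).
Proof.
split; first by move=> n j; exact: Fder_zero.
split; first by move=> n j c th et; exact: Fder_lincomb.
split; first by move=> n j th; exact: Fder_mono.
split; first by move=> n m i j th et _ _; exact: Fder_dbr.
split; first by move=> n j th _; exact: Fder_dbr_d.
split; first by move=> j th; exact: Fder_inj.
move=> j th; exact: Fder_limit.
Qed.

End Gen.

Unset Implicit Arguments.

Theorem proposition2p2 (B : choiceType) (deg : B -> int) (d : T B -> T B)
  (q : nat) (Vf : nat -> vec B -> Prop)
  (* connected, V bounded above *)
  (Hconn : forall b, 0 <= deg b)
  (Hbdd : exists m : int, forall b, deg b <= m)
  (* (\hat L(V), d) is a minimal cdgl *)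
  (Hd : is_cdgl_diff deg d) (Hmin : minimal deg d)
  (* V = V^0 > V^1 > ... > V^q = 0, graded subspaces *)
  (Hq : (0 < q)%N)
  (HV0 : forall v, Vf 0%N v <-> isV v)
  (Hdec : forall a v, Vf a.+1 v -> Vf a v)
  (HVq : forall v, Vf q v -> v = @zeroV B)
  (Hsub0 : forall a, Vf a (@zeroV B))
  (Hsublin : forall a (c : rat) u v, Vf a u -> Vf a v -> Vf a (fun b => c * u b + v b))
  (Hgraded : forall a v (k : int), Vf a v -> Vf a (fun b => if deg b == k then v b else 0)) :
  (* each \mathcal F^n is a graded subspace of Der L *)
  (forall n j, Fder deg Vf q n j (fun _ => @zeroT B)) /\
  (forall n j (c : rat) th et, Fder deg Vf q n j th -> Fder deg Vf q n j et ->
      Fder deg Vf q n j (dlincomb c th et)) /\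
  (* decreasing *)
  (forall n j th, (0 < n)%N -> Fder deg Vf q n.+1 j th -> Fder deg Vf q n j th) /\
  (* [F^n, F^m] \subset F^{n+m} (hence F^1 is a sub Lie algebra, F^n ideals) *)
  (forall n m i j th et, (0 < n)%N -> (0 < m)%N ->
      Fder deg Vf q n i th -> Fder deg Vf q m j et ->
      Fder deg Vf q (n + m) (i + j) (dbr i j th et)) /\
  (* D = [d, -] preserves each F^n *)
  (forall n j th, (0 < n)%N -> Fder deg Vf q n j th ->
      Fder deg Vf q n (-1 + j) (dbr (-1) j d th)) /\
  (* completeness: F^1 -> lim F^1 / F^n is injective ... *)
  (forall j th, (forall n, (0 < n)%N -> Fder deg Vf q n j th) ->
      forall f, isL deg f -> th f = @zeroT B) /\
  (* ... and surjective *)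
  (forall j (th : nat -> T B -> T B),
      (forall n, (0 < n)%N -> Fder deg Vf q 1 j (th n)) ->
      (forall n, (0 < n)%N ->
         Fder deg Vf q n j (dlincomb (-1) (th n) (th n.+1))) ->
      exists Th, Fder deg Vf q 1 j Th /\
        forall n, (0 < n)%N -> Fder deg Vf q n j (dlincomb (-1) (th n) Th)).
Proof.
exact: (@main_all B deg Vf q Hq HV0 Hdec d Hd Hmin).
Qed.
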